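(* Let $k$ be a positive integer. Every $2^k$-$T_0T^\ast$-perfect number $n>1$ has the form $p_1^{2^{k+1}-1}$ for some prime $p_1$.
   Context: For a positive integer $m$, $T(m)$ denotes the product of all positive divisors of $m$, and $T^\ast(m)$ the product of all unitary divisors of $m$ (divisors $d$ with $\gcd(d,m/d)=1$). For an integer $K\ge 2$, an integer $n>1$ is called $K$-$T_0T^\ast$-perfect if $T(T^\ast(n))=n^K$. *)

(* Defs.v *)
From mathcomp Require Import all_boot.
Set Implicit Arguments. Unset Strict Implicit. Unset Printing Implicit Defensive.

Definition T (m : nat) : nat := \prod_(d <- divisors m) d.

Definition Tstar (m : nat) : nat :=
  \prod_(d <- divisors m | coprime d (m %/ d)) d.

Definition KT0Tstar_perfect (K n : nat) : Prop :=
  2 <= K /\ 1 < n /\ T (Tstar n) = n ^ K.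

(* Main.v *)
Require Import Defs.
From mathcomp Require Import all_boot zify.
Set Implicit Arguments. Unset Strict Implicit. Unset Printing Implicit Defensive.

Lemma divdiv n d : 0 < n -> d %| n -> n %/ (n %/ d) = d.
Proof. by move=> n0 dn; rewrite divnA // mulKn. Qed.

Lemma sym_prod n (P : pred nat) : 0 < n ->
  (forall d, d %| n -> P (n %/ d) = P d) ->
  (\prod_(d <- divisors n | P d) d) ^ 2 = n ^ count P (divisors n).
Proof.
move=> n0 HP.
have mem_s x : (x \in filter P (divisors n)) = (x %| n) && P x.
  by rewrite mem_filter -dvdn_divisors // andbC.
have Hperm : perm_eq (map (fun d => n %/ d) (filter P (divisors n)))
                     (filter P (divisors n)).
  apply: uniq_perm; last first.
  - move=> x; apply/mapP/idP.
      case=> d; rewrite mem_s => /andP[dn Pd] ->.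
      by rewrite mem_s dvdn_div // HP.
    rewrite mem_s => /andP[xn Px]; exists (n %/ x); last by rewrite divdiv.
    by rewrite mem_s dvdn_div // HP.
  - by rewrite filter_uniq // divisors_uniq.
  rewrite map_inj_in_uniq ?filter_uniq ?divisors_uniq //.
  move=> x y; rewrite !mem_s => /andP[xn _] /andP[yn _] E.
  by rewrite -(divdiv n0 xn) E divdiv.
rewrite -big_filter expnS expn1.
rewrite perm_sym in Hperm; rewrite {2}(perm_big _ Hperm) /= big_map -big_split /=.
rewrite (eq_big_seq (fun _ => n)); last first.
  by move=> x; rewrite mem_s => /andP[xn _]; rewrite mulnC divnK.
by rewrite big_const_seq count_predT size_filter iter_muln_1.
Qed.
Lemma tau_pow p a : prime p -> size (divisors (p ^ a)) = a.+1.
Proof.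
move=> pp.
have p1 := prime_gt1 pp.
have P0 : 0 < p ^ a by rewrite expn_gt0 ltnW.
have H : perm_eq (divisors (p ^ a)) (map (expn p) (iota 0 a.+1)).
  apply: uniq_perm; first exact: divisors_uniq.
    by rewrite map_inj_uniq ?iota_uniq //; apply: expnI.
  move=> d; rewrite -dvdn_divisors //; apply/(dvdn_pfactor _ _ pp)/mapP.
    by case=> m ma ->; exists m; rewrite // mem_iota.
  by case=> m; rewrite mem_iota /= => ma ->; exists m.
by rewrite (perm_size H) size_map size_iota.
Qed.

Lemma dvd_split a b d : coprime a b -> d %| a * b ->
  d = gcdn d a * gcdn d b.
Proof.
move=> cop dab.
apply/eqP; rewrite eqn_dvd; apply/andP; split; last first.
  rewrite Gauss_dvd ?dvdn_gcdl //=.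
  exact: (coprime_dvdl (dvdn_gcdr d a) (coprime_dvdr (dvdn_gcdr d b) cop)).
have h1 : d %| gcdn a d * b.
  by rewrite muln_gcdl dvdn_gcd dab dvdn_mulr.
have h2 : d %| gcdn a d * gcdn b d.
  by rewrite muln_gcdr dvdn_gcd h1 dvdn_mull.
by rewrite gcdnC [gcdn d b]gcdnC.
Qed.

Lemma tau_mul a b : 0 < a -> 0 < b -> coprime a b ->
  size (divisors (a * b)) = size (divisors a) * size (divisors b).
Proof.
move=> a0 b0 cop.
have ab0 : 0 < a * b by rewrite muln_gt0 a0.
have H : perm_eq (divisors (a * b)) [seq x * y | x <- divisors a, y <- divisors b].
  apply: uniq_perm; first exact: divisors_uniq.
    apply: allpairs_uniq; rewrite ?divisors_uniq //.
    move=> [x y] [x' y'] /allpairsP[[x1 y1] [/= x1a y1b [-> ->]]].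
    move=> /allpairsP[[x2 y2] [/= x2a y2b [-> ->]]] /= E.
    rewrite -!dvdn_divisors // in x1a y1b x2a y2b.
    have ex : x1 = x2.
      have c1 : coprime a y1 := coprime_dvdr y1b cop.
      have c2 : coprime a y2 := coprime_dvdr y2b cop.
      move: (Gauss_gcdl x1 c1) (Gauss_gcdl x2 c2).
      rewrite E => -> ; rewrite (gcdn_idPr x1a) (gcdn_idPr x2a) => ->.
      by [].
    subst x2; congr pair; apply/eqP; rewrite -(eqn_pmul2l (dvdn_gt0 a0 x1a)).
    by rewrite E.
  move=> d; rewrite -dvdn_divisors //; apply/idP/allpairsP.
    move=> dab; exists (gcdn d a, gcdn d b); split => /=.
    - by rewrite -dvdn_divisors // dvdn_gcdr.
    - by rewrite -dvdn_divisors // dvdn_gcdr.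
    exact: dvd_split cop dab.
  case=> [[x y] [/= xa yb ->]]; rewrite -dvdn_divisors // in xa; rewrite -dvdn_divisors // in yb.
  exact: dvdn_mul.
by rewrite (perm_size H) size_allpairs.
Qed.

Lemma unit_count n (l : seq nat) : 0 < n -> uniq l ->
  (forall x, x \in l -> x %| n /\ coprime x (n %/ x)) ->
  size l <= count (fun d => coprime d (n %/ d)) (divisors n).
Proof.
move=> n0 ul H; rewrite -size_filter; apply: uniq_leq_size => // x xl.
have [xn cx] := H x xl.
by rewrite mem_filter cx -dvdn_divisors.
Qed.

Theorem mainTheorem10 (k n : nat) :
  0 < k -> 1 < n -> KT0Tstar_perfect (2 ^ k) n ->
  exists p : nat, prime p /\ n = p ^ (2 ^ k.+1 - 1).
Proof.
move=> k0 n1 [_ [_ HT]].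
have n0 : 0 < n by apply: ltnW.
set P := (fun d => coprime d (n %/ d)).
set u := count P (divisors n).
have HM : Tstar n ^ 2 = n ^ u.
  apply: sym_prod => // d dn.
  by rewrite /P divdiv // coprime_sym.
set M := Tstar n.
have M0 : 0 < M.
  rewrite lt0n; apply/eqP => M0; move: HM; rewrite -/M M0 exp0n // => /esym/eqP.
  by rewrite expn_eq0 eqn0Ngt n0.
set tau := size (divisors M).
have HTM : T M ^ 2 = M ^ tau.
  by rewrite /tau -count_predT; apply: (@sym_prod M xpredT).
have E : u * tau = 2 ^ k.+2.
  apply: (expnI n1).
  rewrite expnM -HM -expnM mulnC expnM -HTM HT -!expnM.
  congr (n ^ _); rewrite !expnS; lia.
set p := pdiv n.
have pp : prime p by apply: pdiv_prime.
set a := logn p n.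
have a0 : 0 < a by rewrite logn_gt0 mem_primes pp n0 pdiv_dvd.
set e := logn p M.
have He : e * 2 = u * a.
  by rewrite mulnC -lognX HM lognX.
have u1 : 2 <= u.
  apply: (@unit_count n [:: 1; n]) => //=.
    by rewrite inE andbT; case: (n) n1 => // [[]].
  move=> x; rewrite !inE => /orP[] /eqP ->; split => //.
    by rewrite /coprime gcd1n.
  by rewrite divnn n0 /coprime gcdn1.
have tauE : tau = e.+1 * size (divisors M`_p^').
  rewrite /tau -{1}(partnC p M0) tau_mul ?part_gt0 ?coprime_partC //.
  by rewrite p_part tau_pow.
have [j _ ej] : exists2 j, j <= k.+2 & e.+1 = 2 ^ j.
  apply/(dvdn_pfactor _ _ (pdiv_prime (isT : 1 < 2)))=> /=.
  by rewrite -E tauE mulnCA dvdn_mulr.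
have [i _ ei] : exists2 i, i <= k.+2 & u = 2 ^ i.
  apply/(dvdn_pfactor _ _ (pdiv_prime (isT : 1 < 2)))=> /=.
  by rewrite -E dvdn_mulr.
have e1 : 0 < e.
  by move: He; case: (e) => // /esym/eqP; rewrite muln_eq0; lia.
have oe : odd e.
  have : ~~ odd e.+1.
    rewrite ej oddX /=; case: (j) ej => // ; rewrite expn0; lia.
  by rewrite /=; case: (odd e).
have u2 : u = 2.
  case: i ei => [|[|i]] ei; first by rewrite ei in u1.
    by [].
  exfalso; move: He; rewrite ei !expnS => He.
  have : e = 2 * (2 ^ i * a).
    apply/eqP; rewrite -(eqn_pmul2r (isT : 0 < 2)) He; apply/eqP; lia.
  by move=> ee; move: oe; rewrite ee oddM.
have np' : n`_p^' = 1.
  apply/eqP; rewrite eqn_leq part_gt0 andbT leqNgt; apply/negP => np1.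
  have nE := partnC p n0.
  have npE : n`_p = p ^ a by rewrite p_part.
  have np1' : 1 < n`_p.
    by rewrite npE -(expn0 p) ltn_exp2l ?prime_gt1.
  have : size [:: 1; n; n`_p] <= u.
    have lt : n`_p < n.
      by rewrite -{2}nE -{1}(muln1 n`_p) ltn_pmul2l // ltnW.
    apply: unit_count => //=.
      by rewrite !inE !negb_or !neq_ltn n1 np1' lt !orbT.
    move=> x; rewrite !inE => /or3P[] /eqP ->; split.
    - exact: dvd1n.
    - by rewrite /coprime gcd1n.
    - exact: dvdnn.
    - by rewrite divnn n0 /coprime gcdn1.
    - by rewrite -{2}nE dvdn_mulr.
    - rewrite -{2}nE mulKn ?part_gt0 //; exact: coprime_partC.
  by rewrite u2.
have nE : n = p ^ a by rewrite -(partnC p n0) np' muln1 p_part.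
have MN : M = n.
  by apply: (expIn (isT : 0 < 2)); rewrite /= HM u2.
exists p; split => //.
move: E; rewrite u2 /tau MN nE tau_pow // -nE => E.
have : a.+1 = 2 ^ k.+1.
  by apply/eqP; rewrite -(eqn_pmul2l (isT : 0 < 2)) E expnS.
by move=> <-; rewrite subn1.
Qed.
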